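(* Let $\{A_i\}_{i\in I}$ be a family of groups. Then $\mathrm{TorLen}( *_{i\in I}A_i)=\sup\{\mathrm{TorLen}(A_i)\}_{i\in I}$.
   Context: For a group $G$, define $\mathrm{Tor}_0(G)=\{e\}$ and inductively $\mathrm{Tor}_{i+1}(G)$ to be the normal closure in $G$ of $\{g\in G : g\,\mathrm{Tor}_i(G)\text{ has finite order in } G/\mathrm{Tor}_i(G)\}$; set $\mathrm{Tor}_\infty(G)=\bigcup_{i}\mathrm{Tor}_i(G)$. The torsion length $\mathrm{TorLen}(G)$ is the smallest $n\ge 0$ with $\mathrm{Tor}_n(G)=\mathrm{Tor}_\infty(G)$, and $\infty$ if no such $n$ exists; the supremum is taken in $\mathbb{N}\cup\{\infty\}$. *)

(* Defs.v *)
From Stdlib Require Import Arith ClassicalEpsilon.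



Record group : Type := Group {
  carrier :> Type;
  gmul : carrier -> carrier -> carrier;
  gone : carrier;
  ginv : carrier -> carrier;
  gmul_assoc : forall x y z, gmul x (gmul y z) = gmul (gmul x y) z;
  gmul_1l : forall x, gmul gone x = x;
  gmul_Vl : forall x, gmul (ginv x) x = gone
}.

Arguments gmul {g} _ _.
Arguments gone {g}.
Arguments ginv {g} _.

Fixpoint gpow (G : group) (g : G) (n : nat) : G :=
  match n with
  | 0 => gone
  | S k => gmul g (gpow G g k)
  end.

Record hom (G H : group) : Type := Hom {
  hom_fun :> G -> H;
  hom_mul : forall x y, hom_fun (gmul x y) = gmul (hom_fun x) (hom_fun y)
}.

Definition is_free_product (I : Type) (A : I -> group) (G : group)
  (iota : forall i, hom (A i) G) : Prop :=
  forall (H : group) (f : forall i, hom (A i) H),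
    exists phi : hom G H,
      (forall i (x : A i), phi (iota i x) = f i x) /\
      (forall psi : hom G H, (forall i (x : A i), psi (iota i x) = f i x) ->
         forall g, psi g = phi g).

Definition normal_subgroup (G : group) (N : G -> Prop) : Prop :=
  N gone /\ (forall x y, N x -> N y -> N (gmul x y)) /\
  (forall x, N x -> N (ginv x)) /\
  (forall x g, N x -> N (gmul (ginv g) (gmul x g))).

Definition normal_closure (G : group) (S : G -> Prop) : G -> Prop :=
  fun x => forall N : G -> Prop, normal_subgroup G N ->
             (forall s, S s -> N s) -> N x.

(** Tor_i(G).  For a normal subgroup N, the coset gN has finite order in G/N
    iff g^n \in N for some n >= 1. *)
Fixpoint Tor (G : group) (n : nat) : G -> Prop :=
  match n with
  | 0 => fun x => x = gone
  | S k => normal_closure G (fun g => exists m, 0 < m /\ Tor G k (gpow G g m))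
  end.

Definition Tor_inf (G : group) : G -> Prop := fun x => exists n, Tor G n x.

(** N \cup {oo}: [Some n] = n, [None] = oo. *)
Definition natinf := option nat.

Definition le_natinf (a b : natinf) : Prop :=
  match a, b with
  | _, None => True
  | None, Some _ => False
  | Some m, Some n => m <= n
  end.

Definition Tor_stable (G : group) (n : nat) : Prop :=
  forall x, Tor G n x <-> Tor_inf G x.

Definition TorLen_spec (G : group) (l : natinf) : Prop :=
  match l with
  | Some n => Tor_stable G n /\ forall m, Tor_stable G m -> n <= m
  | None => forall n, ~ Tor_stable G n
  end.

(** TorLen(G): the smallest n with Tor_n = Tor_oo, or oo if there is none.
    (Such a value always exists; it is selected by classical choice.) *)
Definition TorLen (G : group) : natinf :=
  epsilon (inhabits (None : natinf)) (TorLen_spec G).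

Definition is_sup_natinf (I : Type) (s : I -> natinf) (l : natinf) : Prop :=
  (forall i, le_natinf (s i) l) /\
  (forall u, (forall i, le_natinf (s i) u) -> le_natinf l u).

(* Main.v *)
Require Import Defs.
From Stdlib Require Import Arith Lia List ClassicalEpsilon Classical FunctionalExtensionality PropExtensionality ProofIrrelevance Eqdep.
Import ListNotations.


Notation "x ** y" := (gmul x y) (at level 40, left associativity).

Section GB.
Variable G : group.
Implicit Types x y z : G.

Lemma mul_Vr x : x ** ginv x = gone.
Proof.
  transitivity (ginv (ginv x) ** (ginv x ** (x ** ginv x))).
  - rewrite gmul_assoc, gmul_Vl, gmul_1l. reflexivity.
  - rewrite (gmul_assoc _ (ginv x)), gmul_Vl, gmul_1l. apply gmul_Vl.
Qed.

Lemma mul_1r x : x ** gone = x.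
Proof. rewrite <- (gmul_Vl G x), gmul_assoc, mul_Vr. apply gmul_1l. Qed.

Lemma mul_cancel_l x y z : x ** y = x ** z -> y = z.
Proof.
  intros H. rewrite <- (gmul_1l G y), <- (gmul_1l G z), <- (gmul_Vl G x),
   <- !gmul_assoc, H. reflexivity.
Qed.

Lemma mul_KV x y : ginv x ** (x ** y) = y.
Proof. rewrite gmul_assoc, gmul_Vl; apply gmul_1l. Qed.
Lemma mul_VK x y : x ** (ginv x ** y) = y.
Proof. rewrite gmul_assoc, mul_Vr; apply gmul_1l. Qed.

Lemma inv_uniq x y : x ** y = gone -> y = ginv x.
Proof. intros H. apply (mul_cancel_l x). rewrite H, mul_Vr. reflexivity. Qed.

Lemma inv_inv x : ginv (ginv x) = x.
Proof. symmetry. apply inv_uniq. apply gmul_Vl. Qed.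

Lemma inv_mul x y : ginv (x ** y) = ginv y ** ginv x.
Proof.
  symmetry. apply inv_uniq. rewrite <- gmul_assoc, (gmul_assoc _ y), mul_Vr, gmul_1l. apply mul_Vr.
Qed.

Lemma inv_one : ginv (@gone G) = gone.
Proof. symmetry. apply inv_uniq. apply gmul_1l. Qed.

Lemma normal_one (N : G -> Prop) : normal_subgroup G N -> N gone.
Proof. intros [H _]; exact H. Qed.
Lemma normal_mul (N : G -> Prop) : normal_subgroup G N -> forall x y, N x -> N y -> N (x ** y).
Proof. intros (_&H&_); exact H. Qed.
Lemma normal_inv (N : G -> Prop) : normal_subgroup G N -> forall x, N x -> N (ginv x).
Proof. intros (_&_&H&_); exact H. Qed.
Lemma normal_conj (N : G -> Prop) : normal_subgroup G N -> forall x g, N x -> N (ginv g ** (x ** g)).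
Proof. intros (_&_&_&H); exact H. Qed.
Lemma normal_conj' (N : G -> Prop) : normal_subgroup G N -> forall x g, N x -> N (g ** (x ** ginv g)).
Proof. intros HN x g Hx. rewrite <- (inv_inv g) at 1. apply normal_conj; auto. Qed.

Lemma ncl_normal S : normal_subgroup G (normal_closure G S).
Proof.
  repeat split; unfold normal_closure; intros.
  - apply normal_one; auto.
  - apply normal_mul; [auto | apply H | apply H0]; auto.
  - apply normal_inv; [auto | apply H]; auto.
  - apply normal_conj; [auto | apply H]; auto.
Qed.

Lemma ncl_in (S : G -> Prop) x : S x -> normal_closure G S x.
Proof. intros Hx N _ H. auto. Qed.

Lemma ncl_min (S N : G -> Prop) : normal_subgroup G N -> (forall x, S x -> N x) ->
  forall x, normal_closure G S x -> N x.
Proof. intros HN HS x Hx. apply Hx; auto. Qed.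

Lemma ncl_mono (S T : G -> Prop) : (forall x, S x -> T x) ->
  forall x, normal_closure G S x -> normal_closure G T x.
Proof.
  intros H. apply ncl_min. apply ncl_normal. intros; apply ncl_in; auto.
Qed.

Lemma trivial_normal : normal_subgroup G (fun x => x = gone).
Proof.
  repeat split; intros; subst.
  - apply gmul_1l.
  - apply inv_one.
  - rewrite gmul_1l. apply gmul_Vl.
Qed.

Lemma gpow_conj b g n : gpow G (b ** (g ** ginv b)) n = b ** (gpow G g n ** ginv b).
Proof.
  induction n; simpl.
  - rewrite gmul_1l. symmetry; apply mul_Vr.
  - rewrite IHn. rewrite <- !gmul_assoc. f_equal. rewrite (gmul_assoc _ (ginv b)), gmul_Vl, gmul_1l.
    reflexivity.
Qed.

Lemma gpow_1 g : gpow G g 1 = g.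
Proof. simpl. apply mul_1r. Qed.

End GB.

Arguments mul_Vr {G}. Arguments mul_1r {G}. Arguments mul_KV {G}. Arguments mul_VK {G}.
Arguments inv_inv {G}. Arguments inv_mul {G}. Arguments inv_one {G}.

Section HomB.
Variables (G H : group) (f : hom G H).

Lemma hom_one : f gone = gone.
Proof.
  apply (mul_cancel_l _ (f gone)). rewrite <- hom_mul, gmul_1l, mul_1r. reflexivity.
Qed.

Lemma hom_inv x : f (ginv x) = ginv (f x).
Proof. apply inv_uniq. rewrite <- hom_mul, mul_Vr. apply hom_one. Qed.

Lemma hom_pow x n : f (gpow G x n) = gpow H (f x) n.
Proof. induction n; simpl. apply hom_one. rewrite hom_mul, IHn. reflexivity. Qed.

Lemma preimage_normal (N : H -> Prop) : normal_subgroup H N ->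
  normal_subgroup G (fun x => N (f x)).
Proof.
  intros HN. repeat split; intros.
  - rewrite hom_one. apply normal_one; auto.
  - rewrite hom_mul. apply normal_mul; auto.
  - rewrite hom_inv. apply normal_inv; auto.
  - rewrite !hom_mul, hom_inv. apply normal_conj; auto.
Qed.

Lemma hom_ncl (S : G -> Prop) (T : H -> Prop) : (forall x, S x -> T (f x)) ->
  forall x, normal_closure G S x -> normal_closure H T (f x).
Proof.
  intros HS. apply (ncl_min G S (fun x => normal_closure H T (f x))).
  apply preimage_normal, ncl_normal. intros; apply ncl_in; auto.
Qed.
End HomB.


Lemma sig_eq {T : Type} (P : T -> Prop) (x y : {t | P t}) : proj1_sig x = proj1_sig y -> x = y.
Proof. destruct x, y; simpl; intros; subst; f_equal; apply proof_irrelevance. Qed.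

Definition subgrp (G : group) (S : G -> Prop) (H1 : S gone)
  (H2 : forall x y, S x -> S y -> S (x ** y)) (H3 : forall x, S x -> S (ginv x)) : group.
Proof.
  refine (Group {x | S x} (fun x y => exist _ (proj1_sig x ** proj1_sig y) (H2 _ _ (proj2_sig x) (proj2_sig y)))
            (exist _ gone H1) (fun x => exist _ (ginv (proj1_sig x)) (H3 _ (proj2_sig x))) _ _ _);
  intros; apply sig_eq; simpl.
  - apply gmul_assoc.
  - apply gmul_1l.
  - apply gmul_Vl.
Defined.

Definition hom_id (G : group) : hom G G := Hom G G (fun x => x) (fun x y => eq_refl).
Definition hom_comp (G H K : group) (g : hom H K) (f : hom G H) : hom G K.
Proof. refine (Hom G K (fun x => g (f x)) _). intros; rewrite !hom_mul; reflexivity. Defined.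

Lemma gen_ind (I : Type) (A : I -> group) (G : group) (iota : forall i, hom (A i) G) :
  is_free_product I A G iota ->
  forall (S : G -> Prop), S gone -> (forall x y, S x -> S y -> S (x ** y)) ->
  (forall x, S x -> S (ginv x)) -> (forall i a, S (iota i a)) -> forall g, S g.
Proof.
  intros Hfp S H1 H2 H3 H4 g.
  set (Sg := subgrp G S H1 H2 H3).
  assert (Hm : forall i (x y : A i), exist S (iota i (x ** y)) (H4 i (x ** y)) =
      @gmul Sg (exist S (iota i x) (H4 i x)) (exist S (iota i y) (H4 i y))).
  { intros; apply sig_eq; simpl; apply hom_mul. }
  pose (f := fun i => Hom (A i) Sg (fun a => exist S (iota i a) (H4 i a)) (Hm i)).
  destruct (Hfp Sg f) as [theta [Ht _]].
  set (incl := Hom Sg G (fun x => proj1_sig x) (fun x y => eq_refl)).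
  destruct (Hfp G iota) as [phi0 [_ Hu]].
  assert (E1 := Hu (hom_id G) (fun i x => eq_refl) g).
  assert (E2 := Hu (hom_comp _ _ _ incl theta) (fun i x => f_equal (@proj1_sig _ _) (Ht i x) : incl (theta (iota i x)) = iota i x) g).
  simpl in E1, E2. rewrite E1, <- E2. exact (proj2_sig (theta g)).
Qed.

Definition perm_car (T : Type) := {f : T -> T | exists g, (forall x, f (g x) = x) /\ (forall x, g (f x) = x)}.

Definition perm_inv {T} (f : perm_car T) : perm_car T.
Proof.
  destruct (constructive_indefinite_description _ (proj2_sig f)) as [g [Hg1 Hg2]].
  exists g. exists (proj1_sig f). split; assumption.
Defined.

Lemma perm_inv_spec {T} (f : perm_car T) x : proj1_sig (perm_inv f) (proj1_sig f x) = x.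
Proof.
  unfold perm_inv. destruct (constructive_indefinite_description _ (proj2_sig f)) as [g [Hg1 Hg2]].
  simpl. apply Hg2.
Qed.

Definition perm_mul {T} (f g : perm_car T) : perm_car T.
Proof.
  exists (fun x => proj1_sig f (proj1_sig g x)).
  destruct f as [f [f' [Hf1 Hf2]]], g as [g [g' [Hg1 Hg2]]]. simpl.
  exists (fun x => g' (f' x)). split; intros; congruence.
Defined.

Definition perm_one {T} : perm_car T.
Proof. exists (fun x => x). exists (fun x => x); split; reflexivity. Defined.

Definition Sym (T : Type) : group.
Proof.
  refine (Group (perm_car T) perm_mul perm_one perm_inv _ _ _).
  - intros; apply sig_eq; reflexivity.
  - intros; apply sig_eq; reflexivity.
  - intros; apply sig_eq; simpl. apply functional_extensionality; intros; apply perm_inv_spec.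
Defined.


Section Words.
Variables (I : Type) (A : I -> group) (K : forall i, A i -> Prop).
Hypothesis HK : forall i, normal_subgroup (A i) (K i).

Definition eqv i (x y : A i) : Prop := K i (ginv x ** y).

Lemma eqv_refl i x : eqv i x x.
Proof. unfold eqv; rewrite gmul_Vl. apply normal_one, HK. Qed.
Lemma eqv_sym i x y : eqv i x y -> eqv i y x.
Proof. unfold eqv; intros H. apply (normal_inv _ _ (HK i)) in H. rewrite inv_mul, inv_inv in H. exact H. Qed.
Lemma eqv_trans i x y z : eqv i x y -> eqv i y z -> eqv i x z.
Proof.
  unfold eqv; intros H1 H2. assert (H := normal_mul _ _ (HK i) _ _ H1 H2).
  rewrite <- gmul_assoc, mul_VK in H. exact H.
Qed.
Lemma eqv_mul_l i a x y : eqv i x y -> eqv i (a ** x) (a ** y).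
Proof. unfold eqv. rewrite inv_mul, <- gmul_assoc, mul_KV. auto. Qed.
Lemma eqv_K i x y : eqv i x y -> K i x -> K i y.
Proof.
  unfold eqv; intros H Hx. rewrite <- (mul_VK x y). apply normal_mul; auto.
Qed.
Lemma eqv_K1 i x : K i x -> eqv i x gone.
Proof. intros. unfold eqv. rewrite mul_1r. apply normal_inv; auto. Qed.
Lemma eqv_mulK i a k : K i k -> eqv i (a ** k) a.
Proof.
  intros Hk. unfold eqv. rewrite inv_mul, <- gmul_assoc, gmul_Vl, mul_1r. apply normal_inv; auto.
Qed.
Lemma eqv_Kmul i a k : K i k -> eqv i (k ** a) a.
Proof.
  intros Hk. unfold eqv. rewrite inv_mul, <- gmul_assoc.
  apply normal_conj; auto. apply normal_inv; auto.
Qed.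

Lemma eqv_1K i x : eqv i x gone -> K i x.
Proof.
  unfold eqv; rewrite mul_1r; intros H. rewrite <- (inv_inv x). apply normal_inv; auto.
Qed.
Lemma K_eqv i x y : eqv i x y -> K i x -> K i y.
Proof. apply eqv_K. Qed.

Definition rep i (a : A i) : A i := epsilon (inhabits gone) (fun x => eqv i x a).

Lemma rep_eqv i a : eqv i (rep i a) a.
Proof. unfold rep. apply (epsilon_spec (inhabits gone) (fun x => eqv i x a)). exists a; apply eqv_refl. Qed.

Lemma rep_compat i a b : eqv i a b -> rep i a = rep i b.
Proof.
  intros H. unfold rep. f_equal. apply functional_extensionality; intros x.
  apply propositional_extensionality; split; intros.
  - eapply eqv_trans; eauto.
  - eapply eqv_trans; eauto. apply eqv_sym; auto.
Qed.

Lemma rep_rep i a : rep i (rep i a) = rep i a.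
Proof. apply rep_compat, rep_eqv. Qed.

Definition L := {i : I & A i}.
Definition idx (l : L) : I := projT1 l.

Definition get i (l : L) : option (A i) :=
  match excluded_middle_informative (projT1 l = i) with
  | left e => Some (eq_rect _ A (projT2 l) _ e)
  | right _ => None
  end.

Lemma get_same i a : get i (existT _ i a) = Some a.
Proof.
  unfold get. destruct excluded_middle_informative as [e|n]; simpl in *.
  - rewrite <- eq_rect_eq. reflexivity.
  - exfalso; auto.
Qed.

Lemma get_diff i l : idx l <> i -> get i l = None.
Proof. unfold get, idx. destruct excluded_middle_informative; auto. intros H; exfalso; auto. Qed.

Lemma get_Some i l c : get i l = Some c -> l = existT _ i c.
Proof.
  unfold get. destruct excluded_middle_informative as [e|n]; intros H; inversion H.
  destruct l as [j b]; simpl in *. subst. reflexivity.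
Qed.

Definition canon (l : L) : Prop := rep _ (projT2 l) = projT2 l /\ ~ K _ (projT2 l).

Definition headok (i : I) (v : list L) : Prop :=
  match v with [] => True | l :: _ => idx l <> i end.

Fixpoint red (w : list L) : Prop :=
  match w with
  | [] => True
  | l :: w' => canon l /\ red w' /\ headok (idx l) w'
  end.

Definition mk i (c : A i) (v : list L) : list L :=
  if excluded_middle_informative (K i c) then v else existT _ i (rep i c) :: v.

Definition sig0 i (a : A i) (v : list L) : list L :=
  match v with
  | [] => mk i a []
  | l :: v' => match get i l with Some c => mk i (a ** c) v' | None => mk i a v end
  end.

Definition sg i (a : A i) (v : list L) : list L :=
  if excluded_middle_informative (red v) then sig0 i a v else v.

Lemma mk_compat i c c' v : eqv i c c' -> mk i c v = mk i c' v.
Proof.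
  intros H. unfold mk.
  destruct excluded_middle_informative as [h1|h1]; destruct excluded_middle_informative as [h2|h2]; auto.
  - exfalso; apply h2; eapply eqv_K; eauto.
  - exfalso; apply h1; eapply eqv_K; eauto. apply eqv_sym; auto.
  - rewrite (rep_compat _ _ _ H). reflexivity.
Qed.

Lemma mk_red i c v : red v -> headok i v -> red (mk i c v).
Proof.
  intros Hv Hh. unfold mk. destruct excluded_middle_informative as [h|h]; auto.
  simpl. split; [|split]; auto. unfold canon; simpl. split.
  - apply rep_rep.
  - intros Hk. apply h. eapply eqv_K; eauto. apply rep_eqv.
Qed.

Lemma mk_len i c v : length (mk i c v) <= S (length v).
Proof. unfold mk. destruct excluded_middle_informative; simpl; lia. Qed.

Lemma decomp i v : red v -> exists c v', red v' /\ headok i v' /\ mk i c v' = v /\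
   forall x, sig0 i x v = mk i (x ** c) v'.
Proof.
  intros Hv. destruct v as [|l v'].
  - exists gone, []. split; [|split; [|split]]; simpl; auto.
    + unfold mk. destruct excluded_middle_informative as [h|h]; auto. exfalso; apply h, normal_one, HK.
    + intros x. rewrite mul_1r. reflexivity.
  - destruct (excluded_middle_informative (idx l = i)) as [e|n].
    + destruct l as [j b]. unfold idx in e; simpl in e. subst j.
      exists b, v'. simpl in Hv. destruct Hv as [Hc [Hv' Hh]].
      split; [|split; [|split]]; auto.
      * unfold mk. destruct Hc as [Hr Hk]. simpl in *. destruct excluded_middle_informative; [contradiction|].
        rewrite Hr. reflexivity.
      * intros x. simpl. rewrite get_same. reflexivity.
    + exists gone, (l :: v'). split; [|split; [|split]]; auto.
      * unfold mk. destruct excluded_middle_informative as [h|h]; auto. exfalso; apply h, normal_one, HK.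
      * intros x. simpl. rewrite get_diff by auto. rewrite mul_1r. reflexivity.
Qed.

Lemma sig0_red i a v : red v -> red (sig0 i a v).
Proof.
  intros Hv. destruct (decomp i v Hv) as (c & v' & Hr & Hh & _ & He). rewrite He. apply mk_red; auto.
Qed.

Lemma sig0_mk i a c v' : red v' -> headok i v' -> sig0 i a (mk i c v') = mk i (a ** c) v'.
Proof.
  intros Hr Hh. unfold mk at 1. destruct excluded_middle_informative as [h|h].
  - replace (sig0 i a v') with (mk i a v').
    + apply mk_compat. apply eqv_sym, eqv_mulK; auto.
    + destruct v' as [|l v'']; simpl; auto. simpl in Hh. rewrite get_diff; auto.
  - simpl. rewrite get_same. apply mk_compat. apply eqv_mul_l, rep_eqv.
Qed.

Lemma sig0_mul i a b v : red v -> sig0 i a (sig0 i b v) = sig0 i (a ** b) v.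
Proof.
  intros Hv. destruct (decomp i v Hv) as (c & v' & Hr & Hh & _ & He). rewrite !He.
  rewrite sig0_mk; auto. rewrite gmul_assoc. reflexivity.
Qed.

Lemma sig0_one i v : red v -> sig0 i gone v = v.
Proof.
  intros Hv. destruct (decomp i v Hv) as (c & v' & Hr & Hh & Hm & He). rewrite He, gmul_1l. exact Hm.
Qed.

Lemma sig0_K i k v : red v -> K i k -> sig0 i k v = v.
Proof.
  intros Hv Hk. destruct (decomp i v Hv) as (c & v' & Hr & Hh & Hm & He). rewrite He, <- Hm.
  apply mk_compat. apply eqv_Kmul; auto.
Qed.

Lemma sg_mul i a b v : sg i a (sg i b v) = sg i (a ** b) v.
Proof.
  unfold sg. destruct (excluded_middle_informative (red v)) as [h|h].
  - destruct excluded_middle_informative as [h'|h']. apply sig0_mul; auto.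
    exfalso; apply h'; apply sig0_red; auto.
  - destruct excluded_middle_informative; [contradiction|auto].
Qed.

Lemma sg_one i v : sg i gone v = v.
Proof. unfold sg. destruct excluded_middle_informative; auto. apply sig0_one; auto. Qed.

Lemma sg_K i k v : K i k -> sg i k v = v.
Proof. unfold sg. destruct excluded_middle_informative; auto. intros; apply sig0_K; auto. Qed.

Definition sgp i (a : A i) : perm_car (list L).
Proof.
  exists (sg i a). exists (sg i (ginv a)). split; intros x.
  - rewrite sg_mul, mul_Vr. apply sg_one.
  - rewrite sg_mul, gmul_Vl. apply sg_one.
Defined.

Definition sghom i : hom (A i) (Sym (list L)).
Proof.
  refine (Hom (A i) (Sym (list L)) (sgp i) _).
  intros x y. apply sig_eq. simpl. apply functional_extensionality; intros v. symmetry; apply sg_mul.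
Defined.

End Words.


Section Main.
Variables (I : Type) (A : I -> group) (G : group) (iota : forall i, hom (A i) G).
Hypothesis Hfp : is_free_product I A G iota.
Variables (K : forall i, A i -> Prop).
Hypothesis HK : forall i, normal_subgroup (A i) (K i).
Variable (phi : hom G (Sym (list (L I A)))).
Hypothesis Hphi : forall i x, phi (iota i x) = sghom I A K HK i x.

Let W := list (L I A).
Definition act (g : G) : W -> W := proj1_sig (phi g).

Lemma act_mul g h v : act (g ** h) v = act g (act h v).
Proof. unfold act. rewrite hom_mul. reflexivity. Qed.
Lemma act_iota i a v : act (iota i a) v = sg I A K i a v.
Proof. unfold act. rewrite Hphi. reflexivity. Qed.
Lemma act_one v : act gone v = v.
Proof. unfold act. rewrite hom_one. reflexivity. Qed.

Definition Kgen : G -> Prop := fun x => exists i a, K i a /\ x = iota i a.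
Definition NN := normal_closure G Kgen.

Lemma NN_normal : normal_subgroup G NN.
Proof. apply ncl_normal. Qed.

Lemma act_N n : NN n -> forall v, act n v = v.
Proof.
  intros Hn. assert (H : phi n = gone).
  { apply (ncl_min G Kgen (fun x => phi x = gone)); auto.
    - apply (preimage_normal G _ phi (fun y => y = gone)), trivial_normal.
    - intros x (i & a & Ha & ->). rewrite Hphi. apply sig_eq. simpl.
      apply functional_extensionality; intros v. apply sg_K; auto. }
  intros v. unfold act. rewrite H. reflexivity.
Qed.

Definition cong (x y : G) := exists n, NN n /\ x = y ** n.

Lemma cong_refl x : cong x x.
Proof. exists gone. split. apply normal_one, NN_normal. symmetry; apply mul_1r. Qed.
Lemma cong_sym x y : cong x y -> cong y x.
Proof.
  intros (n & Hn & ->). exists (ginv n). split. apply normal_inv; auto. apply NN_normal.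
  rewrite <- gmul_assoc, mul_Vr, mul_1r. reflexivity.
Qed.
Lemma cong_trans x y z : cong x y -> cong y z -> cong x z.
Proof.
  intros (n & Hn & ->) (m & Hm & ->). exists (m ** n). split.
  apply normal_mul; auto. apply NN_normal. symmetry; apply gmul_assoc.
Qed.
Lemma cong_mul_l z x y : cong x y -> cong (z ** x) (z ** y).
Proof. intros (n & Hn & ->). exists n. split; auto. apply gmul_assoc. Qed.
Lemma cong_mul_r z x y : cong x y -> cong (x ** z) (y ** z).
Proof.
  intros (n & Hn & ->). exists (ginv z ** (n ** z)). split.
  apply normal_conj; auto. apply NN_normal.
  rewrite <- !gmul_assoc. f_equal. rewrite mul_VK. reflexivity.
Qed.
Lemma cong_mul x y x' y' : cong x x' -> cong y y' -> cong (x ** y) (x' ** y').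
Proof. intros; eapply cong_trans. apply cong_mul_r; eauto. apply cong_mul_l; auto. Qed.
Lemma cong_pow x y n : cong x y -> cong (gpow G x n) (gpow G y n).
Proof. intros H; induction n; simpl. apply cong_refl. apply cong_mul; auto. Qed.
Lemma cong_N n y : NN n -> cong (n ** y) y.
Proof.
  intros Hn. exists (ginv y ** (n ** y)). split. apply normal_conj; auto. apply NN_normal.
  rewrite mul_VK. reflexivity.
Qed.
Lemma cong_act x y : cong x y -> forall v, act x v = act y v.
Proof. intros (n & Hn & ->) v. rewrite act_mul, (act_N n Hn). reflexivity. Qed.

Fixpoint eval (w : W) : G :=
  match w with [] => gone | l :: w' => iota (projT1 l) (projT2 l) ** eval w' end.

Lemma eval_app u v : eval (u ++ v) = eval u ** eval v.
Proof. induction u; simpl. rewrite gmul_1l; auto. rewrite IHu, gmul_assoc. reflexivity. Qed.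

Lemma cong_iota_eqv i a b : eqv I A K i a b -> cong (iota i a) (iota i b).
Proof.
  intros H. exists (iota i (ginv b ** a)). split.
  - apply ncl_in. exists i, (ginv b ** a). split; auto. apply eqv_sym; auto.
  - rewrite <- hom_mul, mul_VK. reflexivity.
Qed.

Lemma eval_mk i c v : cong (eval (mk I A K i c v)) (iota i c ** eval v).
Proof.
  unfold mk. destruct excluded_middle_informative as [h|h].
  - apply cong_sym, cong_N. apply ncl_in. exists i, c; auto.
  - simpl. apply cong_mul_r. apply cong_iota_eqv. apply rep_eqv; auto.
Qed.

Lemma eval_sig0 i a v : red I A K v -> cong (eval (sig0 I A K i a v)) (iota i a ** eval v).
Proof.
  intros Hv. destruct (decomp I A K HK i v Hv) as (c & v' & Hr & Hh & Hm & He).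
  rewrite He. eapply cong_trans. apply eval_mk. rewrite hom_mul, <- gmul_assoc.
  apply cong_mul_l. rewrite <- Hm. apply cong_sym, eval_mk.
Qed.

Definition Pg (g : G) := forall v, red I A K v -> red I A K (act g v) /\ cong (eval (act g v)) (g ** eval v).

Lemma Pg_mul g h : Pg g -> Pg h -> Pg (g ** h).
Proof.
  intros Hg Hh v Hv. rewrite act_mul. destruct (Hh v Hv) as [H1 H2]. destruct (Hg _ H1) as [H3 H4].
  split; auto. eapply cong_trans; [apply H4|]. rewrite <- gmul_assoc. apply cong_mul_l; auto.
Qed.

Lemma Pg_iota i a : Pg (iota i a).
Proof.
  intros v Hv. rewrite act_iota. unfold sg. destruct excluded_middle_informative; [|contradiction].
  split. apply sig0_red; auto. apply eval_sig0; auto.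
Qed.

Lemma Pg_one : Pg gone.
Proof. intros v Hv. rewrite act_one, gmul_1l. split; auto. apply cong_refl. Qed.

Lemma Pg_all g : Pg g.
Proof.
  assert (H : forall g, Pg g /\ Pg (ginv g)).
  { apply (gen_ind I A G iota Hfp).
    - rewrite inv_one. split; apply Pg_one.
    - intros x y [H1 H2] [H3 H4]. split. apply Pg_mul; auto. rewrite inv_mul. apply Pg_mul; auto.
    - intros x [H1 H2]. rewrite inv_inv. auto.
    - intros i a. rewrite <- hom_inv. split; apply Pg_iota. }
  apply H.
Qed.

Definition nf g := act g [].

Lemma nf_red g : red I A K (nf g).
Proof. apply (Pg_all g); simpl; auto. Qed.

Lemma nf_cong g : cong g (eval (nf g)).
Proof. destruct (Pg_all g [] Logic.I) as [_ H]. simpl in H. rewrite mul_1r in H. apply cong_sym; auto. Qed.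

Lemma red_tail l v : red I A K (l :: v) -> red I A K v.
Proof. simpl; tauto. Qed.

Lemma red_app_l u v : red I A K (u ++ v) -> red I A K u.
Proof.
  induction u as [|l u IH]; simpl; auto. intros (H1 & H2 & H3). split; [|split]; auto.
  destruct u; simpl in *; auto.
Qed.

Lemma act_eval w v : red I A K (w ++ v) -> act (eval w) v = w ++ v.
Proof.
  induction w as [|l w IH]; simpl; intros Hr.
  - apply act_one.
  - destruct Hr as (Hc & Hr & Hh). rewrite act_mul, IH; auto.
    destruct l as [i a]. rewrite act_iota. simpl. unfold sg.
    destruct excluded_middle_informative; [|contradiction].
    destruct Hc as [Hrep Hk]; simpl in *.
    assert (E : sig0 I A K i a (w ++ v) = mk I A K i a (w ++ v)).
    { destruct (w ++ v) as [|l' u]; simpl; auto. simpl in Hh. rewrite get_diff; auto. }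
    rewrite E. unfold mk. destruct excluded_middle_informative; [contradiction|]. rewrite Hrep. reflexivity.
Qed.

Fixpoint wpow (w : W) (k : nat) : W := match k with 0 => [] | S k => w ++ wpow w k end.

Lemma red_app u l v : red I A K u -> red I A K (l :: v) -> headok I A (idx I A (last u l)) (l :: v) ->
  red I A K (u ++ l :: v).
Proof.
  induction u as [|x u IH]; simpl; auto. intros (H1 & H2 & H3) Hlv Hh. split; [|split]; auto.
  - destruct u as [|y u]; simpl in *; auto.
  - destruct u; simpl in *; auto.
Qed.

Definition Tgen : G -> Prop := fun x => exists i a, (exists m, 0 < m /\ K i (gpow (A i) a m)) /\ x = iota i a.
Definition NP := normal_closure G Tgen.

Lemma NN_NP x : NN x -> NP x.
Proof.
  apply ncl_mono. intros y (i & a & Ha & ->). exists i, a. split; auto. exists 1. split; auto.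
  rewrite gpow_1. auto.
Qed.

Lemma main_aux n : forall g, length (nf g) <= n -> forall m, 0 < m -> NN (gpow G g m) -> NP g.
Proof.
  induction n as [n IH] using lt_wf_ind. intros g Hlen m Hm HN.
  assert (Hact : forall v, act (gpow G g m) v = v) by (apply act_N; auto).
  assert (Hc := nf_cong g). assert (Hr := nf_red g).
  destruct (nf g) as [|l1 w1] eqn:Hw.
  - destruct Hc as (k & Hk & ->). rewrite gmul_1l. apply NN_NP; auto.
  - destruct w1 as [|l2 rest].
    + destruct l1 as [i a]. simpl in Hc. rewrite mul_1r in Hc.
      assert (Hp := cong_pow _ _ m Hc). rewrite <- hom_pow in Hp.
      assert (E := cong_act _ _ Hp []). rewrite Hact, act_iota in E.
      unfold sg in E. destruct excluded_middle_informative as [_|h]; [|simpl in h; tauto].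
      simpl in E. unfold mk in E. destruct excluded_middle_informative as [Hk|]; [|discriminate].
      destruct Hc as (k & Hk' & ->). apply normal_mul. apply ncl_normal.
      * apply ncl_in. exists i, a. split; eauto.
      * apply NN_NP; auto.
    + destruct (exists_last (l := l2 :: rest) ltac:(discriminate)) as [u [y Huy]].
      rewrite Huy in *.
      destruct (excluded_middle_informative (idx I A l1 = idx I A y)) as [Heq|Hne].
      * (* conjugate to shorten *)
        destruct l1 as [i a], y as [j b]. unfold idx in Heq; simpl in Heq. subst j.
        assert (Hry := Hr). simpl in Hr. destruct Hr as (Hc1 & Hr1 & Hh1).
        assert (Hb : canon I A K (existT _ i b)).
        { clear -Hr1. induction u as [|x u IHu]; simpl in *; tauto. }
        destruct Hb as [Hbr Hbk]; simpl in Hbr, Hbk.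
        set (g' := iota i b ** (g ** ginv (iota i b))).
        assert (Hlen' : length (nf g') < length (existT _ i a :: u ++ [existT _ i b])).
        { unfold nf, g'. rewrite !act_mul. rewrite <- hom_inv, act_iota.
          assert (E1 : sg I A K i (ginv b) [] = [existT _ i (rep I A K i (ginv b))]).
          { unfold sg. destruct excluded_middle_informative as [_|h]; [|simpl in h; tauto].
            simpl. unfold mk. destruct excluded_middle_informative as [h|]; auto.
            exfalso; apply Hbk. rewrite <- (inv_inv b). apply normal_inv; auto. }
          rewrite act_iota, E1. rewrite (cong_act _ _ Hc). simpl eval. rewrite eval_app, act_mul.
          simpl eval. rewrite mul_1r, act_iota.
          assert (E2 : sg I A K i b [existT _ i (rep I A K i (ginv b))] = []).
          { unfold sg. destruct excluded_middle_informative as [_|h].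
            - simpl. rewrite get_same. unfold mk. destruct excluded_middle_informative as [|h]; auto.
              exfalso; apply h. apply (eqv_1K I A K HK). rewrite <- (mul_Vr b).
              apply eqv_mul_l; auto. apply rep_eqv; auto.
            - exfalso; apply h. simpl. split; auto. split; [apply rep_rep; auto|].
              intros Hk. apply Hbk. rewrite <- (inv_inv b). apply normal_inv; auto.
              apply (eqv_K I A K HK _ _ _ (rep_eqv I A K HK i (ginv b)) Hk). }
          rewrite act_mul, act_iota, E2.
          assert (Hru : red I A K (existT _ i a :: u)).
          { apply (red_app_l (existT _ i a :: u) [existT _ i b]); auto. }
          rewrite (act_eval u []) by (rewrite app_nil_r; eapply red_tail; eauto).
          rewrite app_nil_r.
          assert (E3 : sg I A K i a u = existT _ i a :: u).
          { assert (X := act_eval [existT _ i a] u Hru). simpl in X.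
            rewrite act_mul, act_one, act_iota in X. exact X. }
          rewrite E3. unfold sg. destruct excluded_middle_informative as [_|h]; [|contradiction].
          simpl. rewrite get_same. eapply Nat.le_lt_trans. apply mk_len. simpl. rewrite length_app.
          simpl. lia. }
        assert (HN' : NN (gpow G g' m)).
        { unfold g'. rewrite gpow_conj. apply normal_conj'; auto. apply NN_normal. }
        assert (IH' : NP g').
        { apply (IH (length (nf g'))) with (m := m); auto. eapply Nat.lt_le_trans; [exact Hlen'|exact Hlen]. }
        assert (Eg : g = ginv (iota i b) ** (g' ** iota i b)).
        { unfold g'. rewrite <- (gmul_assoc _ (iota i b)), mul_KV, <- gmul_assoc, gmul_Vl, mul_1r. reflexivity. }
        rewrite Eg. apply normal_conj; auto. apply ncl_normal.
      * (* cyclically reduced: contradiction *)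
        exfalso. set (w := l1 :: u ++ [y]) in *.
        assert (Hlast : last w l1 = y).
        { unfold w. rewrite app_comm_cons, last_last. reflexivity. }
        assert (Hpow : forall k, red I A K (wpow w k) /\ act (gpow G g k) [] = wpow w k).
        { induction k as [|k IHk]; simpl. split; auto. apply act_one.
          destruct IHk as [IH1 IH2]. rewrite act_mul, IH2, (cong_act _ _ Hc).
          assert (R : red I A K (w ++ wpow w k)).
          { destruct k as [|k]; [simpl; rewrite app_nil_r; auto|].
            assert (Ew : wpow w (S k) = l1 :: ((u ++ [y]) ++ wpow w k)) by reflexivity.
            rewrite Ew. apply red_app; [exact Hr | rewrite <- Ew; exact IH1 | rewrite Hlast; simpl; auto]. }
          split; auto. apply act_eval; auto. }
        destruct (Hpow m) as [_ Hm2]. rewrite Hact in Hm2. destruct m; [lia|]. simpl in Hm2.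
        unfold w in Hm2. discriminate.
Qed.

Lemma main g m : 0 < m -> NN (gpow G g m) -> NP g.
Proof. intros; eapply main_aux; eauto. Qed.

End Main.


Lemma Tor_normal (G : group) n : normal_subgroup G (Tor G n).
Proof. destruct n; simpl. apply trivial_normal. apply ncl_normal. Qed.

Lemma Tor_S (G : group) n x : Tor G n x -> Tor G (S n) x.
Proof. intros H. simpl. apply ncl_in. exists 1. split; auto. rewrite gpow_1; auto. Qed.

Lemma Tor_le (G : group) n m x : n <= m -> Tor G n x -> Tor G m x.
Proof. induction 1; auto. intros; apply Tor_S; auto. Qed.

Lemma Tor_step_mono (G : group) n m : (forall x, Tor G n x -> Tor G m x) ->
  forall x, Tor G (S n) x -> Tor G (S m) x.
Proof.
  intros H. simpl. apply ncl_mono. intros x (k & Hk & Hx). exists k; auto.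
Qed.

Lemma hom_Tor (G H : group) (f : hom G H) n x : Tor G n x -> Tor H n (f x).
Proof.
  revert x; induction n; simpl; intros x Hx.
  - subst. apply hom_one.
  - apply (hom_ncl G H f (fun g => exists m, 0 < m /\ Tor G n (gpow G g m)) (fun g => exists m, 0 < m /\ Tor H n (gpow H g m))); auto. intros y (k & Hk & Hy). exists k. split; auto.
    rewrite <- hom_pow. auto.
Qed.

Lemma stable_up (G : group) n m : Tor_stable G n -> n <= m -> Tor_stable G m.
Proof.
  intros H Hle x. split.
  - intros Hx. exists m; auto.
  - intros Hx. apply (Tor_le G n m); auto. apply H; auto.
Qed.

Lemma stable_of_step (G : group) n : (forall x, Tor G (S n) x -> Tor G n x) -> Tor_stable G n.
Proof.
  intros H. assert (Hj : forall j x, Tor G (n + j) x -> Tor G n x).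
  { induction j; intros x Hx. rewrite Nat.add_0_r in Hx; auto.
    rewrite Nat.add_succ_r in Hx. apply H. eapply Tor_step_mono; eauto. }
  intros x; split. intros; exists n; auto.
  intros [k Hk]. apply (Hj k). apply (Tor_le G k); auto. lia.
Qed.

Lemma TorLen_ok (G : group) : TorLen_spec G (TorLen G).
Proof.
  unfold TorLen. apply epsilon_spec.
  destruct (classic (exists n, Tor_stable G n)) as [[n Hn]|Hno].
  - assert (Hmin : forall n, Tor_stable G n -> exists k, Tor_stable G k /\ forall m, Tor_stable G m -> k <= m).
    { induction n0 as [n0 IH] using lt_wf_ind. intros Hs.
      destruct (classic (exists m, m < n0 /\ Tor_stable G m)) as [[m [Hm Hsm]]|Hn0].
      - apply (IH m); auto.
      - exists n0. split; auto. intros m Hm. destruct (le_lt_dec n0 m); auto.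
        exfalso; apply Hn0; eauto. }
    destruct (Hmin n Hn) as [k Hk]. exists (Some k). exact Hk.
  - exists None. intros n Hn; apply Hno; eauto.
Qed.

Lemma TorLen_le (G : group) n : Tor_stable G n -> exists k, TorLen G = Some k /\ k <= n.
Proof.
  intros Hn. assert (H := TorLen_ok G). destruct (TorLen G) as [k|].
  - exists k. split; auto. apply H; auto.
  - exfalso; eapply H; eauto.
Qed.

Section FP.
Variables (I : Type) (A : I -> group) (G : group) (iota : forall i, hom (A i) G).
Hypothesis Hfp : is_free_product I A G iota.

Definition retr_fun i j (x : A j) : A i :=
  match excluded_middle_informative (j = i) with
  | left e => eq_rect j A x i e
  | right _ => gone
  end.

Definition retr_hom i j : hom (A j) (A i).
Proof.
  refine (Hom (A j) (A i) (retr_fun i j) _). intros x y. unfold retr_fun.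
  destruct excluded_middle_informative as [e|n].
  - subst. reflexivity.
  - symmetry; apply gmul_1l.
Defined.

Lemma retract i : exists r : hom G (A i), forall x, r (iota i x) = x.
Proof.
  destruct (Hfp (A i) (retr_hom i)) as [r [Hr _]]. exists r. intros x. rewrite Hr.
  simpl. unfold retr_fun. destruct excluded_middle_informative as [e|n].
  - rewrite <- eq_rect_eq. reflexivity.
  - exfalso; auto.
Qed.

Lemma main_fp (K : forall i, A i -> Prop) (HK : forall i, normal_subgroup (A i) (K i)) g m :
  0 < m -> NN I A G iota K (gpow G g m) -> NP I A G iota K g.
Proof.
  destruct (Hfp _ (sghom I A K HK)) as [phi [Hphi _]].
  apply (main I A G iota Hfp K HK phi Hphi).
Qed.

Lemma TorG_sub n x : Tor G n x -> NN I A G iota (fun i => Tor (A i) n) x.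
Proof.
  revert x; induction n; intros x Hx.
  - simpl in Hx. subst. apply normal_one, ncl_normal.
  - simpl in Hx. revert x Hx. apply ncl_min. apply ncl_normal.
    intros g (m & Hm & Hg). apply IHn in Hg.
    assert (H := main_fp (fun i => Tor (A i) n) (fun i => Tor_normal (A i) n) g m Hm Hg).
    clear Hg. revert g H. apply ncl_mono. intros y (i & a & Ha & ->). exists i, a. split; auto.
    simpl. apply ncl_in. auto.
Qed.

Lemma stable_fp s : (forall i, Tor_stable (A i) s) -> Tor_stable G s.
Proof.
  intros Hs. apply stable_of_step. simpl. apply ncl_min. apply Tor_normal.
  intros g (m & Hm & Hg). apply TorG_sub in Hg.
  assert (H := main_fp (fun i => Tor (A i) s) (fun i => Tor_normal (A i) s) g m Hm Hg).
  clear Hg. revert g H. apply ncl_min. apply Tor_normal.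
  intros y (i & a & Ha & ->). apply hom_Tor. apply (Hs i).
  exists (S s). simpl. apply ncl_in. exact Ha.
Qed.

Lemma stable_factor n i : Tor_stable G n -> Tor_stable (A i) n.
Proof.
  intros H x. split. intros; exists n; auto.
  intros [k Hk]. destruct (retract i) as [r Hr]. rewrite <- (Hr x). apply hom_Tor.
  apply H. exists k. apply hom_Tor; auto.
Qed.

End FP.

Theorem corollary3p15 (I : Type) (A : I -> group) (G : group)
  (iota : forall i, hom (A i) G) :
  is_free_product I A G iota ->
  is_sup_natinf I (fun i => TorLen (A i)) (TorLen G).
Proof.
  intros Hfp. split.
  - intros i. assert (HG := TorLen_ok G). destruct (TorLen G) as [n|]; [|destruct (TorLen (A i)); exact Logic.I].
    destruct HG as [Hn _].
    destruct (TorLen_le (A i) n (stable_factor I A G iota Hfp n i Hn)) as [k [-> Hk]].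
    simpl; exact Hk.
  - intros [s|] Hu; [|destruct (TorLen G); exact Logic.I].
    assert (Hs : forall i, Tor_stable (A i) s).
    { intros i. specialize (Hu i). assert (Hi := TorLen_ok (A i)).
      destruct (TorLen (A i)) as [k|]; simpl in Hu; [|contradiction].
      destruct Hi as [Hk _]. eapply stable_up; eauto. }
    destruct (TorLen_le G s (stable_fp I A G iota Hfp s Hs)) as [k [-> Hk]]. simpl; exact Hk.
Qed.
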